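(* Let $L$ be a Lie algebra over a field $K$ of characteristic different from $2$ and $3$, and let $I$ be an ideal of $L$ of codimension $1$ which is perfect, i.e. $[I,I]=I$. Then there is an injective linear map $Z^2_{comm}(L)\to Z^2_{comm}(I)\oplus K$, where the summand $K$ corresponds to the trivial cocycle $\varphi$ defined by $\varphi(x,x)=1$, $\varphi(I,I)=\varphi(I,x)=0$ for a fixed $x\in L\setminus I$.
   Context: $Z^2_{comm}(L)$ is the space of symmetric bilinear forms $\varphi:L\times L\to K$ with $\varphi([x,y],z)+\varphi([z,x],y)+\varphi([y,z],x)=0$ for all $x,y,z\in L$. *)

(* Defs.v *)
From mathcomp Require Import all_boot all_order all_algebra.
Set Implicit Arguments. Unset Strict Implicit. Unset Printing Implicit Defensive.
Import GRing.Theory.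
Local Open Scope ring_scope.

Section LieDefs.
Variables (K : fieldType) (L : lmodType K).

Definition is_lie_bracket (br : L -> L -> L) : Prop :=
  [/\ (forall (a : K) (u v w : L), br (a *: u + v) w = a *: br u w + br v w),
      (forall (a : K) (u v w : L), br w (a *: u + v) = a *: br w u + br w v),
      (forall u : L, br u u = 0) &
      (forall u v w : L, br u (br v w) + br v (br w u) + br w (br u v) = 0)].

Definition is_subspace (I : pred L) : Prop :=
  0 \in I /\ (forall (a : K) (u v : L), u \in I -> v \in I -> a *: u + v \in I).

Definition is_ideal (br : L -> L -> L) (I : pred L) : Prop :=
  is_subspace I /\ (forall y i : L, i \in I -> br y i \in I).

Definition codim1 (I : pred L) : Prop :=
  exists x0 : L, x0 \notin I /\ forall y : L, exists c : K, y - c *: x0 \in I.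

Definition perfect (br : L -> L -> L) (I : pred L) : Prop :=
  forall i : L, i \in I -> exists s : seq (L * L),
    all (fun p => (p.1 \in I) && (p.2 \in I)) s /\
    i = \sum_(p <- s) br p.1 p.2.

Definition Z2comm_on (br : L -> L -> L) (I : pred L) (phi : L -> L -> K) : Prop :=
  [/\ (forall u v, u \in I -> v \in I -> phi u v = phi v u),
      (forall (a : K) u v w, u \in I -> v \in I -> w \in I ->
          phi (a *: u + v) w = a * phi u w + phi v w) &
      (forall u v w, u \in I -> v \in I -> w \in I ->
          phi (br u v) w + phi (br w u) v + phi (br v w) u = 0)].

Definition Z2comm (br : L -> L -> L) (phi : L -> L -> K) : Prop :=
  Z2comm_on br predT phi.

(* Concrete model of Z^2_comm(I): forms on L that vanish outside I x I and
   whose restriction to I x I lies in Z^2_comm(I).  (Restriction to I x I is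
   a linear bijection from this space onto Z^2_comm(I).) *)
Definition Z2comm_ideal (br : L -> L -> L) (I : pred L) (psi : L -> L -> K) : Prop :=
  Z2comm_on br I psi /\
  (forall u v, ~~ ((u \in I) && (v \in I)) -> psi u v = 0).

End LieDefs.

(* Main.v *)
Require Import Defs.
From mathcomp Require Import all_boot all_order all_algebra.
From mathcomp Require Import ring.
From Stdlib Require Import FunctionalExtensionality.
Import GRing.Theory.
Local Open Scope ring_scope.

Section Helpers.
Context {K : fieldType} {L : lmodType K} {br : L -> L -> L}.

Lemma Z2_sym {phi} : Z2comm br phi -> forall u v, phi u v = phi v u.
Proof. by case=> S _ _ u v; apply: S. Qed.

Lemma Z2_lin {phi} : Z2comm br phi -> forall a u v w, phi (a *: u + v) w = a * phi u w + phi v w.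
Proof. by case=> _ Lin _ a u v w; apply: Lin. Qed.

Lemma Z2_coc {phi} : Z2comm br phi -> forall u v w,
   phi (br u v) w + phi (br w u) v + phi (br v w) u = 0.
Proof. by case=> _ _ C u v w; apply: C. Qed.

Lemma Z2_0 {phi} : Z2comm br phi -> forall w, phi 0 w = 0.
Proof.
move=> H w; have := Z2_lin H 1 0 0 w.
rewrite scale1r addr0 mul1r => E.
by apply: (@addrI _ (phi 0 w)); rewrite addr0 -E.
Qed.

Lemma Z2_D {phi} : Z2comm br phi -> forall u v w, phi (u + v) w = phi u w + phi v w.
Proof. by move=> H u v w; rewrite -{1}(scale1r u) Z2_lin // mul1r. Qed.

Lemma Z2_Z {phi} : Z2comm br phi -> forall c u w, phi (c *: u) w = c * phi u w.
Proof. by move=> H c u w; rewrite -(addr0 (c *: u)) Z2_lin // Z2_0 // addr0. Qed.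

Lemma Z2_Dr {phi} : Z2comm br phi -> forall u v w, phi w (u + v) = phi w u + phi w v.
Proof. by move=> H u v w; rewrite !(Z2_sym H w) Z2_D. Qed.

Lemma Z2_Zr {phi} : Z2comm br phi -> forall c u w, phi w (c *: u) = c * phi w u.
Proof. by move=> H c u w; rewrite !(Z2_sym H w) Z2_Z. Qed.

Lemma Z2_diff {phi1 phi2} : Z2comm br phi1 -> Z2comm br phi2 ->
  Z2comm br (fun u v => phi1 u v - phi2 u v).
Proof.
move=> H1 H2; split=> [u v _ _|a u v w _ _ _|u v w _ _ _].
- by rewrite (Z2_sym H1) (Z2_sym H2).
- by rewrite (Z2_lin H1) (Z2_lin H2); ring.
- have := Z2_coc H1 u v w; have := Z2_coc H2 u v w.
  move=> E2 E1; rewrite -[0]subr0 -{1}E1 -E2; ring.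
Qed.

Lemma br_anti : is_lie_bracket br -> forall u v, br u v = - br v u.
Proof.
case=> Bl Br Ba _ u v.
have BlD : forall u v w, br (u + v) w = br u w + br v w.
  by move=> u1 v1 w1; rewrite -[u1 in LHS]scale1r Bl scale1r.
have BrD : forall u v w, br w (u + v) = br w u + br w v.
  by move=> u1 v1 w1; rewrite -[u1 in LHS]scale1r Br scale1r.
have := Ba (u + v).
rewrite BlD !BrD !Ba add0r addr0.
by move/eqP; rewrite addr_eq0 => /eqP.
Qed.

Context {I : pred L} {x : L}.
Hypotheses (Hlie : is_lie_bracket br) (Hid : is_ideal br I) (Hc : codim1 I)
  (Hp : perfect br I) (HxI : x \notin I).

Lemma Ineg u : u \in I -> - u \in I.
Proof.
case: Hid => [[_ S] _] Hu.
by have := S (-1) u 0 Hu (proj1 (proj1 Hid)); rewrite addr0 scaleN1r.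
Qed.

Lemma decomp u : exists c i, i \in I /\ u = i + c *: x.
Proof.
case: Hc => x0 [Hx0 Hy].
have [e He] := Hy x; have [c Hu] := Hy u.
have e0 : e != 0.
  apply/negP => /eqP E; move: He; rewrite E scale0r subr0 => He.
  by move/negP: HxI.
exists (c / e), (u - (c / e) *: x); split; last by rewrite subrK.
case: Hid => [[_ S] _].
have := S (- (c / e)) _ _ He Hu.
have -> : - (c / e) *: (x - e *: x0) + (u - c *: x0) = u - (c / e) *: x.
  rewrite scalerBr scalerA mulNr mulfVK // scaleNr scaleNr opprK.
  by rewrite [u - _]addrC addrA addrK addrC.
by [].
Qed.

Lemma inj_core {psi} : Z2comm br psi ->
  (forall i j, i \in I -> j \in I -> psi i j = 0) -> psi x x = 0 ->
  forall u v, psi u v = 0.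
Proof.
move=> H HI Hxx.
have Hix : forall i, i \in I -> psi i x = 0.
  move=> i /Hp [s [Hall ->]].
  elim: s Hall => [|[a b] s IH] /=; first by rewrite big_nil Z2_0.
  case/andP => /andP [/= Ha Hb] Hall.
  rewrite big_cons Z2_D // IH // addr0 /=.
  have := Z2_coc H a b x.
  have Hxa : br x a \in I by apply: (proj2 Hid).
  have Hbx : br b x \in I by rewrite br_anti //; apply: Ineg; apply: (proj2 Hid).
  by rewrite (HI _ _ Hxa Hb) (HI _ _ Hbx Ha) !addr0.
move=> u v.
have [c [i [Hi ->]]] := decomp u; have [d [j [Hj ->]]] := decomp v.
rewrite Z2_D // Z2_Z // !Z2_Dr // !Z2_Zr // HI // Hix // Hxx (Z2_sym H x) Hix //.
by rewrite !mulr0 !add0r mulr0.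
Qed.

End Helpers.

Theorem lemma5p2 (K : fieldType) (L : lmodType K) (br : L -> L -> L)
    (I : pred L) (x : L) :
  (2%:R : K) != 0 -> (3%:R : K) != 0 ->
  is_lie_bracket br ->
  is_ideal br I -> codim1 I -> perfect br I ->
  x \notin I ->
  exists F : (L -> L -> K) -> (L -> L -> K) * K,
    [/\ (* F maps Z^2_comm(L) into Z^2_comm(I) (+) K *)
        (forall phi, Z2comm br phi -> Z2comm_ideal br I (F phi).1),
        (* F is linear on Z^2_comm(L) *)
        (forall (a : K) phi1 phi2, Z2comm br phi1 -> Z2comm br phi2 ->
           F (fun u v => a * phi1 u v + phi2 u v) =
           ((fun u v => a * (F phi1).1 u v + (F phi2).1 u v),
            a * (F phi1).2 + (F phi2).2)),
        (* F is injective on Z^2_comm(L) *)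
        (forall phi1 phi2, Z2comm br phi1 -> Z2comm br phi2 ->
           F phi1 = F phi2 -> phi1 = phi2) &
        (* the summand K corresponds to the trivial cocycle phi_x with
           phi_x(x,x) = 1, phi_x(I,I) = phi_x(I,x) = 0 *)
        (forall phi, Z2comm br phi -> phi x x = 1 ->
           (forall i y, i \in I -> phi i y = 0) ->
           F phi = ((fun _ _ => 0), 1))].
Proof.
move=> _ _ Hlie Hid Hc Hp HxI.
exists (fun phi => ((fun u v => if (u \in I) && (v \in I) then phi u v else 0), phi x x)).
split.
- move=> phi H; split; last by move=> u v /negbTE /= ->.
  split=> [u v Hu Hv|a u v w Hu Hv Hw|u v w Hu Hv Hw] /=.
  + by rewrite Hu Hv (Z2_sym H).
  + have Hav : a *: u + v \in I by case: Hid => [[_ S] _]; apply: S.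
    by rewrite Hav Hu Hv Hw /= (Z2_lin H).
  + have B : forall y i, i \in I -> br y i \in I by case: Hid.
    have Buv : br u v \in I by apply: B.
    have Bwu : br w u \in I by apply: B.
    have Bvw : br v w \in I by apply: B.
    by rewrite Buv Bwu Bvw Hu Hv Hw /= (Z2_coc H).
- move=> a phi1 phi2 H1 H2 /=; congr pair.
  apply: functional_extensionality => u; apply: functional_extensionality => v.
  by case: ifP => _ //; rewrite mulr0 addr0.
- move=> phi1 phi2 H1 H2 [E1 E2].
  have Hd := Z2_diff H1 H2.
  have Z := inj_core Hlie Hid Hc Hp HxI Hd.
  have HI : forall i j, i \in I -> j \in I -> phi1 i j - phi2 i j = 0.
    move=> i j Hi Hj.
    have := congr1 (fun f => f i j) E1; rewrite /= Hi Hj /= => ->.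
    by rewrite subrr.
  have Hxx : phi1 x x - phi2 x x = 0 by rewrite E2 subrr.
  apply: functional_extensionality => u; apply: functional_extensionality => v.
  by apply/eqP; rewrite -subr_eq0; apply/eqP; apply: (Z HI Hxx).
- move=> phi H Hxx Hi /=; rewrite Hxx; congr pair.
  apply: functional_extensionality => u; apply: functional_extensionality => v.
  by case: ifP => // /andP [Hu _]; apply: Hi.
Qed.
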